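(* Let $f$ be a subluminal rotational wave. Then $\sigma(\mathrm{P})$ is contained in the imaginary axis.
   Context: A traveling wave of speed $c$ ($c^2\neq1$) of $u_{tt}-u_{xx}+\sin u=0$ is a real solution $f$ of $(c^2-1)f''+\sin f=0$, with energy $E$ given by $\tfrac12(c^2-1)(f')^2+1-\cos f=E$. It is subluminal rotational if $c^2<1$ and $E<0$. Let $\gamma=1/(c^2-1)$. $\sigma(\mathrm{P})$ is the set of $\lambda\in\mathbb{C}$ for which $p''-2c\gamma\lambda p'+\gamma(\lambda^2+\cos f(z))p=0$ has a nontrivial solution bounded on $\mathbb{R}$. *)

(* Defs.v *)
From Stdlib Require Import Reals.
From Coquelicot Require Import Coquelicot.
Open Scope R_scope.

(* f is a traveling wave of speed c of u_tt - u_xx + sin u = 0: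
   a real C^2 solution of (c^2-1) f'' + sin f = 0 on all of R,
   with f' = df and f'' = d2f. *)
Definition traveling_wave (c : R) (f df d2f : R -> R) : Prop :=
  c ^ 2 <> 1 /\
  (forall z, is_derive f z (df z)) /\
  (forall z, is_derive df z (d2f z)) /\
  (forall z, (c ^ 2 - 1) * d2f z + sin (f z) = 0).

Definition wave_energy (c : R) (f df : R -> R) (E : R) : Prop :=
  forall z, / 2 * (c ^ 2 - 1) * (df z) ^ 2 + 1 - cos (f z) = E.

Definition subluminal_rotational (c : R) (f df d2f : R -> R) : Prop :=
  traveling_wave c f df d2f /\ c ^ 2 < 1 /\
  exists E, wave_energy c f df E /\ E < 0.

Definition gamma (c : R) : R := / (c ^ 2 - 1).

Definition in_spectrum_P (c : R) (f : R -> R) (lam : C) : Prop :=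
  exists p dp d2p : R -> C,
    (forall z, is_derive p z (dp z)) /\
    (forall z, is_derive dp z (d2p z)) /\
    (forall z, (d2p z - RtoC (2 * c * gamma c) * lam * dp z
                 + RtoC (gamma c) * (lam * lam + RtoC (cos (f z))) * p z)%C = 0%C) /\
    (exists z0, p z0 <> 0%C) /\
    (exists M, forall z, Cmod (p z) <= M).

(* Main.v *)
Require Import Defs.
From Stdlib Require Import Reals Lra.
From Coquelicot Require Import Coquelicot.
Open Scope R_scope.
Lemma normle (a b : R) : Rabs a <= sqrt (Rabs a * (Rabs a * 1) + Rabs b * (Rabs b * 1)).
Proof.
  rewrite <- (sqrt_Rsqr (Rabs a)) at 1 by apply Rabs_pos.
  apply sqrt_le_1_alt. unfold Rsqr.
  assert (0 <= Rabs b * (Rabs b * 1)) by (rewrite Rmult_1_r; apply Rle_0_sqr). lra.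
Qed.
Lemma lin_Re : is_linear (U:=C_R_NormedModule) (V:=R_NormedModule) (fun c : C => Re c).
Proof.
  split.
  - intros x y. destruct x, y. reflexivity.
  - intros k x. destruct x. simpl. unfold scal; simpl. unfold mult; simpl. ring.
  - exists 1. split. lra. intros [a b]. rewrite Rmult_1_l.
    unfold norm; simpl. unfold abs; simpl. unfold prod_norm. simpl. unfold norm; simpl; unfold abs; simpl.
    apply normle.
Qed.
Lemma lin_Im : is_linear (U:=C_R_NormedModule) (V:=R_NormedModule) (fun c : C => Im c).
Proof.
  split.
  - intros x y. destruct x, y. reflexivity.
  - intros k x. destruct x. simpl. unfold scal; simpl. unfold mult; simpl. ring.
  - exists 1. split. lra. intros [a b]. rewrite Rmult_1_l.
    unfold norm; simpl. unfold abs; simpl. unfold prod_norm. simpl. unfold norm; simpl; unfold abs; simpl.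
    rewrite Rplus_comm. apply normle.
Qed.
Lemma is_derive_Re (p : R -> C) z l : is_derive p z l -> is_derive (fun t => Re (p t)) z (Re l).
Proof.
  intros H. unfold is_derive in *.
  eapply filterdiff_ext_lin.
  apply (filterdiff_comp' p (fun c : C => Re c)). exact H.
  apply filterdiff_linear. apply lin_Re.
  intros y. simpl. destruct l. simpl. unfold scal; simpl. unfold mult; simpl. ring.
Qed.
Lemma is_derive_Im (p : R -> C) z l : is_derive p z l -> is_derive (fun t => Im (p t)) z (Im l).
Proof.
  intros H. unfold is_derive in *.
  eapply filterdiff_ext_lin.
  apply (filterdiff_comp' p (fun c : C => Im c)). exact H.
  apply filterdiff_linear. apply lin_Im.
  intros y. simpl. destruct l. simpl. unfold scal; simpl. unfold mult; simpl. ring.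
Qed.
Lemma psi_deriv (P1 P2 Q1 Q2 F D : R -> R) (S1 S2 a b c z : R) :
  let m := 1 - c^2 in let g := / (c^2 - 1) in
  m <> 0 -> D z <> 0 ->
  is_derive P1 z (Q1 z) -> is_derive P2 z (Q2 z) ->
  is_derive Q1 z S1 -> is_derive Q2 z S2 ->
  is_derive F z (D z) -> is_derive D z (sin (F z) / m) ->
  S1 - 2*c*g*(a*Q1 z - b*Q2 z) + g*((a^2-b^2+cos (F z))*P1 z - 2*a*b*P2 z) = 0 ->
  S2 - 2*c*g*(a*Q2 z + b*Q1 z) + g*((a^2-b^2+cos (F z))*P2 z + 2*a*b*P1 z) = 0 ->
  is_derive (fun t =>
     m*(a*((Q1 t - sin (F t)/(m * D t) * P1 t)*P1 t + (Q2 t - sin (F t)/(m * D t) * P2 t)*P2 t)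
      + b*((Q2 t - sin (F t)/(m * D t) * P2 t)*P1 t - (Q1 t - sin (F t)/(m * D t) * P1 t)*P2 t))
     + c*(a^2+b^2)*(P1 t^2+P2 t^2)) z
   (a*((a^2+b^2)*(P1 z^2+P2 z^2) + m*((Q1 z - sin (F z)/(m * D z) * P1 z)^2
        + (Q2 z - sin (F z)/(m * D z) * P2 z)^2))).
Proof.
  intros m g Hm HD H1 H2 H3 H4 H5 H6 E1 E2.
  auto_derive.
  - repeat split; try (eexists; eassumption); try (apply Rmult_integral_contrapositive_currified; assumption).
  - replace (Derive (fun x => P1 x) z) with (Q1 z) by (symmetry; apply is_derive_unique; exact H1).
    replace (Derive (fun x => P2 x) z) with (Q2 z) by (symmetry; apply is_derive_unique; exact H2).
    replace (Derive (fun x => Q1 x) z) with S1 by (symmetry; apply is_derive_unique; exact H3).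
    replace (Derive (fun x => Q2 x) z) with S2 by (symmetry; apply is_derive_unique; exact H4).
    replace (Derive (fun x => F x) z) with (D z) by (symmetry; apply is_derive_unique; exact H5).
    replace (Derive (fun x => D x) z) with (sin (F z) / m) by (symmetry; apply is_derive_unique; exact H6).
    assert (HS1 : S1 = 2*c*g*(a*Q1 z - b*Q2 z) - g*((a^2-b^2+cos (F z))*P1 z - 2*a*b*P2 z)) by lra.
    assert (HS2 : S2 = 2*c*g*(a*Q2 z + b*Q1 z) - g*((a^2-b^2+cos (F z))*P2 z + 2*a*b*P1 z)) by lra.
    rewrite HS1, HS2. unfold g. unfold m in *.
    assert (Hc: c^2 - 1 <> 0) by (intro; apply Hm; lra).
    assert (Hs: sin (F z) ^2 = 1 - cos (F z) ^2) by (rewrite <- (sin2_cos2 (F z)); unfold Rsqr; ring).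
    field; tauto.
Qed.
Lemma mvt_lb (g dg : R -> R) a b k : a <= b ->
  (forall x, a <= x <= b -> is_derive g x (dg x)) ->
  (forall x, a <= x <= b -> k <= dg x) -> k*(b-a) <= g b - g a.
Proof.
  intros Hab Hd Hk.
  destruct (MVT_gen g a b dg) as [x [Hx Heq]].
  - intros x Hx. apply Hd. rewrite Rmin_left in Hx by lra. rewrite Rmax_right in Hx by lra. lra.
  - intros x Hx. rewrite Rmin_left in Hx by lra. rewrite Rmax_right in Hx by lra.
    apply continuity_pt_filterlim. apply (ex_derive_continuous (K:=R_AbsRing) (V:=R_NormedModule) g). eexists. apply Hd. exact Hx.
  - rewrite Rmin_left in Hx by lra. rewrite Rmax_right in Hx by lra.
    rewrite Heq. specialize (Hk x Hx). nra.
Qed.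

Lemma blowup_pos (g T : R -> R) K : 0 < K ->
  (forall z, is_derive g z (T z)) -> (forall z, 0 <= T z) ->
  (forall z, g z ^ 2 <= K * T z) -> forall Y, g Y <= 0.
Proof.
  intros HK Hd HT Hb Y. destruct (Rle_or_lt (g Y) 0) as [H|H]; [exact H|exfalso].
  assert (mono : forall z, Y <= z -> g Y <= g z).
  { intros z Hz. pose proof (mvt_lb g T Y z 0 Hz (fun x _ => Hd x) (fun x _ => HT x)). lra. }
  set (L := K / g Y).
  assert (HL : 0 <= L) by (unfold L; apply Rlt_le; apply Rdiv_lt_0_compat; lra).
  assert (Hm := mvt_lb (fun t => - / g t) (fun t => T t / g t ^ 2) Y (Y+L) (1/K)).
  assert (Hpos : forall x, Y <= x -> 0 < g x) by (intros x Hx; specialize (mono x Hx); lra).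
  assert (Hm' : 1 / K * (Y + L - Y) <= - / g (Y+L) - - / g Y).
  { apply Hm. lra.
    - intros x Hx. replace (T x / g x ^ 2) with (- (- T x / g x ^ 2)) by (field; specialize (Hpos x ltac:(lra)); lra).
      apply (is_derive_opp (fun y => / g y)). apply is_derive_inv. apply Hd.
      specialize (Hpos x ltac:(lra)); lra.
    - intros x Hx. specialize (Hpos x ltac:(lra)). specialize (Hb x).
      assert (E : T x / g x ^ 2 - 1/K = (K * T x - g x ^2) / (K * g x ^2)) by (field; lra).
      assert (0 <= (K * T x - g x ^2) / (K * g x ^2)).
      { apply Rdiv_le_0_compat. lra. apply Rmult_lt_0_compat; [lra| apply pow_lt; lra]. }
      lra. }
  replace (1 / K * (Y + L - Y)) with (/ g Y) in Hm' by (unfold L; field; lra).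
  assert (0 < / g (Y + L)) by (apply Rinv_0_lt_compat; apply Hpos; lra).
  lra.
Qed.

Lemma blowup (g T : R -> R) K : 0 < K ->
  (forall z, is_derive g z (T z)) -> (forall z, 0 <= T z) ->
  (forall z, g z ^ 2 <= K * T z) -> forall Y, g Y = 0.
Proof.
  intros HK Hd HT Hb Y.
  assert (H1 := blowup_pos g T K HK Hd HT Hb Y).
  assert (H2 := blowup_pos (fun z => - g (- z)) (fun z => T (- z)) K HK).
  assert (H3 : - g (- - Y) <= 0).
  { apply H2.
    - intros z. replace (T (- z)) with (- (scal (-1) (T (-z)))) by (unfold scal; simpl; unfold mult; simpl; ring).
      apply (is_derive_opp (fun z => g (- z))). apply (is_derive_comp g (fun z => - z)).
      apply Hd. auto_derive; auto; ring.
    - intros z. apply HT.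
    - intros z. replace ((- g (- z)) ^ 2) with (g (-z) ^ 2) by ring. apply Hb. }
  rewrite Ropp_involutive in H3. lra.
Qed.
Lemma bound_alg a b c m P1 P2 V1 V2 M : a <> 0 -> 0 < m <= 1 -> c^2 <= 1 -> P1^2+P2^2 <= M^2 ->
 (/a * (m*(a*(V1*P1+V2*P2) + b*(V2*P1 - V1*P2)) + c*(a^2+b^2)*(P1^2+P2^2)))^2
   <= (2*(a^2+b^2)*M^2/a^2 + 1) * ((a^2+b^2)*(P1^2+P2^2) + m*(V1^2+V2^2)).
Proof.
  intros Ha Hm Hc HP.
  set (X := V1*P1+V2*P2). set (Y := V2*P1 - V1*P2).
  set (u := a*X+b*Y). set (L := a^2+b^2). set (Rr := P1^2+P2^2). set (W := V1^2+V2^2).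
  set (T := L*Rr + m*W).
  assert (HL : 0 <= L) by (unfold L; nra).
  assert (HR : 0 <= Rr) by (unfold Rr; nra).
  assert (HW : 0 <= W) by (unfold W; nra).
  assert (Hu : u^2 <= L*(Rr*W)).
  { assert (E1 : L*(X^2+Y^2) - u^2 = (a*Y - b*X)^2) by (unfold L,u; ring).
    assert (E2 : X^2+Y^2 = Rr*W) by (unfold X,Y,Rr,W; ring).
    assert (Hs := pow2_ge_0 (a*Y - b*X)). rewrite <- E1, E2 in Hs. lra. }
  set (psi := m*u + c*L*Rr).
  assert (H1 : psi^2 <= 2*(m*u)^2 + 2*(c*L*Rr)^2) by (unfold psi; assert (Hs := pow2_ge_0 (m*u - c*L*Rr)); nra).
  assert (H2 : (m*u)^2 <= m*(L*(Rr*W))).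
  { assert ((m*u)^2 = m*(m*u^2)) by ring. assert (m*u^2 <= L*(Rr*W)).
    { assert (m*u^2 <= u^2) by nra. lra. } nra. }
  assert (H3 : (c*L*Rr)^2 <= (L*Rr)^2).
  { assert ((c*L*Rr)^2 = c^2 * (L*Rr)^2) by ring. assert (0 <= (L*Rr)^2) by nra. nra. }
  assert (H4 : psi^2 <= 2*L*Rr*T).
  { assert (2*L*Rr*T = 2*(m*(L*(Rr*W))) + 2*(L*Rr)^2) by (unfold T; ring). lra. }
  assert (H5 : psi^2 <= 2*L*M^2*T).
  { assert (0 <= T) by (unfold T; assert (0 <= L*Rr) by (apply Rmult_le_pos; lra); assert (0 <= m*W) by (apply Rmult_le_pos; lra); lra). assert (L*Rr*T <= L*M^2*T).
    { apply Rmult_le_compat_r; [lra|]. apply Rmult_le_compat_l; [lra|]. unfold Rr; lra. }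
    assert (2*L*Rr*T = 2*(L*Rr*T)) by ring. assert (2*L*M^2*T = 2*(L*M^2*T)) by ring. lra. }
  change (m * u + c * L * Rr) with psi.
  assert (Ha2 : 0 < a^2) by (apply pow2_gt_0; auto).
  replace ((/ a * psi)^2) with (psi^2 / a^2) by (field; auto).
  assert (0 <= T) by (unfold T; assert (0 <= L*Rr) by (apply Rmult_le_pos; lra); assert (0 <= m*W) by (apply Rmult_le_pos; lra); lra).
  apply (Rle_trans _ (2 * L * M ^ 2 * T / a^2)).
  - unfold Rdiv. apply Rmult_le_compat_r. apply Rlt_le, Rinv_0_lt_compat; lra. lra.
  - replace (2 * L * M ^ 2 * T / a ^ 2) with (2 * L * M ^ 2 / a ^ 2 * T) by (field; auto). nra.
Qed.

Theorem lemma4p1 (c : R) (f df d2f : R -> R) :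
  subluminal_rotational c f df d2f ->
  forall lam : C, in_spectrum_P c f lam -> Re lam = 0.
Proof.
  intros [[Hc2 [Hf [Hdf Hode]]] [Hc1 [E [HE HEneg]]]] lam
    [p [dp [d2p [Hp [Hdp [Heq [[z0 Hz0] [M HM]]]]]]]].
  destruct (Req_dec (Re lam) 0) as [Ha|Ha]; [exact Ha|exfalso].
  set (m := 1 - c^2).
  assert (Hm : 0 < m) by (unfold m; lra).
  assert (Hc2' : 0 <= c^2) by (apply pow2_ge_0).
  assert (HD : forall z, df z <> 0).
  { intros z Hz. specialize (HE z). rewrite Hz in HE. destruct (COS_bound (f z)). lra. }
  assert (Hdf' : forall z, is_derive df z (sin (f z) / m)).
  { intros z. specialize (Hode z). replace (sin (f z) / m) with (d2f z).
    apply Hdf. replace (sin (f z)) with (- ((c^2-1)*d2f z)) by lra. unfold m. field. lra. }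
  set (a := Re lam). set (b := Im lam).
  set (P1 := fun t => Re (p t)). set (P2 := fun t => Im (p t)).
  set (Q1 := fun t => Re (dp t)). set (Q2 := fun t => Im (dp t)).
  assert (HP1 : forall z, is_derive P1 z (Q1 z)) by (intro z; apply is_derive_Re, Hp).
  assert (HP2 : forall z, is_derive P2 z (Q2 z)) by (intro z; apply is_derive_Im, Hp).
  assert (HQ1 : forall z, is_derive Q1 z (Re (d2p z))) by (intro z; apply is_derive_Re, Hdp).
  assert (HQ2 : forall z, is_derive Q2 z (Im (d2p z))) by (intro z; apply is_derive_Im, Hdp).
  assert (E1 : forall z, Re (d2p z) - 2*c*(/ (c^2-1))*(a*Q1 z - b*Q2 z)
     + (/ (c^2-1))*((a^2-b^2+cos (f z))*P1 z - 2*a*b*P2 z) = 0).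
  { intros z. pose proof (f_equal (fun w => Re w) (Heq z)) as H. unfold gamma in H.
    unfold a, b, P1, P2, Q1, Q2. simpl in H.
    destruct (p z), (dp z), (d2p z), lam. simpl in *. eapply eq_trans; [|exact H]. ring. }
  assert (E2 : forall z, Im (d2p z) - 2*c*(/ (c^2-1))*(a*Q2 z + b*Q1 z)
     + (/ (c^2-1))*((a^2-b^2+cos (f z))*P2 z + 2*a*b*P1 z) = 0).
  { intros z. pose proof (f_equal (fun w => Im w) (Heq z)) as H. unfold gamma in H.
    unfold a, b, P1, P2, Q1, Q2. simpl in H.
    destruct (p z), (dp z), (d2p z), lam. simpl in *. eapply eq_trans; [|exact H]. ring. }
  set (psi := fun t =>
     m*(a*((Q1 t - sin (f t)/(m * df t) * P1 t)*P1 t + (Q2 t - sin (f t)/(m * df t) * P2 t)*P2 t)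
      + b*((Q2 t - sin (f t)/(m * df t) * P2 t)*P1 t - (Q1 t - sin (f t)/(m * df t) * P1 t)*P2 t))
     + c*(a^2+b^2)*(P1 t^2+P2 t^2)).
  set (T := fun z => (a^2+b^2)*(P1 z^2+P2 z^2) + m*((Q1 z - sin (f z)/(m * df z) * P1 z)^2
        + (Q2 z - sin (f z)/(m * df z) * P2 z)^2)).
  assert (Hpsi : forall z, is_derive psi z (a * T z)).
  { intros z. apply (psi_deriv P1 P2 Q1 Q2 f df (Re (d2p z)) (Im (d2p z)) a b c z);
      try lra; auto. }
  set (g := fun t => / a * psi t).
  assert (Hg : forall z, is_derive g z (T z)).
  { intros z. replace (T z) with (/ a * (a * T z)) by (field; exact Ha).
    apply (is_derive_scal psi z (/ a)). apply Hpsi. }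
  assert (HT : forall z, 0 <= T z).
  { intros z. unfold T. assert (0 <= P1 z^2+P2 z^2) by (assert (H1:=pow2_ge_0 (P1 z)); assert (H2:=pow2_ge_0 (P2 z)); lra).
    assert (0 <= a^2+b^2) by (assert (H1:=pow2_ge_0 a); assert (H2:=pow2_ge_0 b); lra).
    set (w := (Q1 z - sin (f z) / (m * df z) * P1 z) ^ 2 + (Q2 z - sin (f z) / (m * df z) * P2 z) ^ 2).
    assert (0 <= w) by (unfold w; assert (H1:=pow2_ge_0 (Q1 z - sin (f z) / (m * df z) * P1 z));
       assert (H2:=pow2_ge_0 (Q2 z - sin (f z) / (m * df z) * P2 z)); lra).
    assert (0 <= (a^2+b^2)*(P1 z^2+P2 z^2)) by (apply Rmult_le_pos; lra).
    assert (0 <= m * w) by (apply Rmult_le_pos; lra). lra. }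
  assert (HPM : forall z, P1 z^2 + P2 z^2 <= M^2).
  { intros z. specialize (HM z). unfold Cmod in HM. unfold P1, P2.
    assert (Hs : 0 <= fst (p z) ^ 2 + snd (p z) ^ 2)
      by (assert (H1:=pow2_ge_0 (fst (p z))); assert (H2:=pow2_ge_0 (snd (p z))); lra).
    pose proof (sqrt_pos (fst (p z) ^ 2 + snd (p z) ^ 2)).
    pose proof (sqrt_sqrt _ Hs) as Hq.
    change (fst (p z) ^ 2 + snd (p z) ^ 2 <= M ^ 2). nra. }
  set (K := 2*(a^2+b^2)*M^2/a^2 + 1).
  assert (HK : 0 < K).
  { unfold K. assert (0 <= 2*(a^2+b^2)*M^2/a^2); [|lra].
    apply Rdiv_le_0_compat. assert (H1:=pow2_ge_0 a); assert (H2:=pow2_ge_0 b); assert (H3:=pow2_ge_0 M).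
    apply Rmult_le_pos; [|lra]. lra. apply pow2_gt_0; exact Ha. }
  assert (Hb : forall z, g z ^ 2 <= K * T z).
  { intros z. unfold g, psi, T, K. apply bound_alg; auto; unfold m; lra. }
  assert (H0 := blowup g T K HK Hg HT Hb).
  assert (HT0 : T z0 = 0).
  { assert (Hc : is_derive (fun _ : R => 0) z0 (T z0)).
    { apply (is_derive_ext g). intros t. apply H0. apply Hg. }
    apply is_derive_unique in Hc. rewrite Derive_const in Hc. symmetry. exact Hc. }
  unfold T in HT0.
  assert (Hp0 : P1 z0 ^2 + P2 z0 ^2 = 0).
  { assert (Hab : 0 < a^2+b^2) by (assert (H1:=pow2_gt_0 a Ha); assert (H2:=pow2_ge_0 b); lra).
    assert (H1:=pow2_ge_0 (P1 z0)); assert (H2:=pow2_ge_0 (P2 z0)).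
    set (w := (Q1 z0 - sin (f z0) / (m * df z0) * P1 z0) ^ 2 + (Q2 z0 - sin (f z0) / (m * df z0) * P2 z0) ^ 2) in HT0.
    assert (0 <= w) by (unfold w; assert (H3:=pow2_ge_0 (Q1 z0 - sin (f z0) / (m * df z0) * P1 z0));
       assert (H4:=pow2_ge_0 (Q2 z0 - sin (f z0) / (m * df z0) * P2 z0)); lra).
    nra. }
  apply Hz0. unfold P1, P2 in Hp0. destruct (p z0) as [x y]. simpl in Hp0.
  assert (x = 0) by nra. assert (y = 0) by nra. subst. reflexivity.
Qed.
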